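(* Let $\mathbb{X}\subseteq\mathbb{R}^n$, let $\mathbb{Y}$ be a finite set of classes, and let $D$ be a distribution on $\mathbb{X}\times\mathbb{Y}$ with joint density $p(\bm{x},k)$, marginal density $p(\bm{x})=\sum_k p(\bm{x},k)$ and posterior $p(\mathrm{y}=k\mid\mathbf{x}=\bm{x})=p(\bm{x},k)/p(\bm{x})$. Fix a distance $d$ on $\mathbb{X}$ and $\epsilon>0$, and for $\bm{x}\in\mathbb{X}$ let $\mathbb{V}_{\bm{x}}=\{\bm{x'}\in\mathbb{X}: d(\bm{x},\bm{x'})\le\epsilon\}$. For a classifier $h:\mathbb{X}\to\mathbb{Y}$ and $(\bm{x},y)\in\mathbb{X}\times\mathbb{Y}$, say $\operatorname{Rob}(h,\bm{x},y;\mathbb{V}_{\bm{x}})$ holds iff both (i) there is no $\bm{x'}\in\mathbb{X}$ with $d(\bm{x},\bm{x'})\le\epsilon$ and $h(\bm{x'})\neq y$, and (ii) there is no $(\bm{x'},y')\in\mathbb{X}\times\mathbb{Y}$ with $p(\bm{x'},y')>0$, $d(\bm{x},\bm{x'})\le\epsilon$ and $h(\bm{x'})\neq y'$. Define the irreducible robustness error $$\zeta^\sharp_D=\inf_{h\ \text{measurable}}\ \mathbb{E}_{(\mathbf{x},\mathrm{y})\sim D}\big[1-\mathbf{1}_{\operatorname{Rob}(h,\mathbf{x},\mathrm{y};\mathbb{V}_{\mathbf{x}})}\big].$$ Then $$\zeta^\sharp_D\ \ge\ \int\Big\lceil 1-\max_k p(\mathrm{y}=k\mid\mathbf{x}=\bm{x})\Big\rceil\,p(\bm{x})\,d\bm{x}\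 \ge\ \beta_D .$$
   Context: $\lceil\cdot\rceil$ is the ceiling function, so for $t\in[0,1]$, $\lceil t\rceil=1$ if $t>0$ and $0$ if $t=0$. The Bayes error of $D$ is $\beta_D=\int\big(1-\max_k p(\mathrm{y}=k\mid\mathbf{x}=\bm{x})\big)\,p(\bm{x})\,d\bm{x}$. *)

(* Defs.v *)
From HB Require Import structures.
From mathcomp Require Import all_boot all_order all_algebra.
From mathcomp Require Import all_classical all_reals all_analysis.
Set Implicit Arguments. Unset Strict Implicit. Unset Printing Implicit Defensive.
Import Order.TTheory GRing.Theory Num.Theory.
Local Open Scope classical_set_scope.
Local Open Scope ring_scope.

Section Defs.
Variables (R : realType) (n : nat) (Y : finType).
Notation Rn := (n.-tuple R).

Definition box (a b : Rn) : set Rn :=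
  [set x | forall i : 'I_n, tnth a i < tnth x i <= tnth b i].

(* mu is the n-dimensional Lebesgue measure on the Borel sets of R^n
   (characterized by giving every box its volume). *)
Definition is_lebesgue_Rn (mu : {measure set Rn -> \bar R}) : Prop :=
  forall a b : Rn, (forall i, tnth a i <= tnth b i) ->
    mu (box a b) = (\prod_(i < n) (tnth b i - tnth a i))%:E.

Definition is_distance (X : set Rn) (d : Rn -> Rn -> R) : Prop :=
  [/\ forall x y, X x -> X y -> 0 <= d x y,
      forall x y, X x -> X y -> (d x y = 0 <-> x = y),
      forall x y, X x -> X y -> d x y = d y x &
      forall x y z, X x -> X y -> X z -> d x z <= d x y + d y z].

(* measurability of a classifier X -> Y (Y finite with discrete sigma-algebra) *)
Definition measurable_classifier (X : set Rn) (h : Rn -> Y) : Prop :=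
  forall k : Y, measurable (X `&` h @^-1` [set k]).

Definition Rob (X : set Rn) (d : Rn -> Rn -> R) (eps : R) (p : Rn -> Y -> R)
    (h : Rn -> Y) (x : Rn) (y : Y) : Prop :=
  (~ exists x', [/\ X x', d x x' <= eps & h x' != y]) /\
  (~ exists x' y', [/\ X x', 0 < p x' y', d x x' <= eps & h x' != y']).

(* E_{(x,y) ~ D} [1 - 1_{Rob(h,x,y;V_x)}], D having joint density p w.r.t. mu x counting *)
Definition rob_error (mu : {measure set Rn -> \bar R}) (X : set Rn)
    (d : Rn -> Rn -> R) (eps : R) (p : Rn -> Y -> R) (h : Rn -> Y) : \bar R :=
  (\sum_(k : Y) \int[mu]_(x in X)
     ((1 - (`[< Rob X d eps p h x k >])%:R) * p x k)%:E)%E.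

Definition irreducible_rob_error (mu : {measure set Rn -> \bar R}) (X : set Rn)
    (d : Rn -> Rn -> R) (eps : R) (p : Rn -> Y -> R) : \bar R :=
  ereal_inf [set rob_error mu X d eps p h | h in measurable_classifier X].

Definition marginal (p : Rn -> Y -> R) (x : Rn) : R := \sum_(k : Y) p x k.
Definition posterior (p : Rn -> Y -> R) (x : Rn) (k : Y) : R :=
  p x k / marginal p x.
Definition max_posterior (p : Rn -> Y -> R) (x : Rn) : R :=
  \big[Num.max/0]_(k : Y) posterior p x k.

Definition ceilR (t : R) : R := (Num.ceil t)%:~R.

Definition bayes_error (mu : {measure set Rn -> \bar R}) (X : set Rn)
    (p : Rn -> Y -> R) : \bar R :=
  \int[mu]_(x in X) ((1 - max_posterior p x) * marginal p x)%:E.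

End Defs.

(* Main.v *)
Require Import Defs.
From HB Require Import structures.
From mathcomp Require Import all_boot all_order all_algebra.
From mathcomp Require Import all_classical all_reals all_analysis.
From mathcomp Require Import lra.
Import Order.TTheory GRing.Theory Num.Theory.
Local Open Scope classical_set_scope.
Local Open Scope ring_scope.

Lemma le_integral_nm d (T : measurableType d) (R : realType)
  (mu : {measure set T -> \bar R}) (D : set T) (f g : T -> \bar R) :
  (forall x, D x -> (0 <= f x)%E) -> (forall x, D x -> (f x <= g x)%E) ->
  (\int[mu]_(x in D) f x <= \int[mu]_(x in D) g x)%E.
Proof.
move=> f0 fg.
have g0 : forall x, D x -> (0 <= g x)%E.
  by move=> x Dx; exact: le_trans (f0 _ Dx) (fg _ Dx).
rewrite (ge0_integralE _ f0) (ge0_integralE _ g0).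
apply: ereal_sup_le => _ [h hf <-]; exists h => // x.
apply: le_trans (hf x) _; rewrite /patch; case: ifP => // /set_mem Dx.
exact: fg.
Qed.

Lemma mbool_R d (T : measurableType d) (R : realType) (D : set T) (b : T -> bool) :
  measurable_fun D b -> measurable_fun D (fun x => ((b x)%:R : R)).
Proof.
move=> mb.
have -> : (fun x => ((b x)%:R : R)) = (fun t : bool => (t%:R : R)) \o b by [].
apply: measurableT_comp => //.
Qed.

Theorem theorem3 (R : realType) (n : nat) (Y : finType)
  (mu : {measure set (n.-tuple R) -> \bar R}) (X : set (n.-tuple R))
  (p : n.-tuple R -> Y -> R) (d : n.-tuple R -> n.-tuple R -> R) (eps : R) :
  is_lebesgue_Rn mu ->
  measurable X ->
  (forall x k, X x -> 0 <= p x k) ->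
  (forall k, measurable_fun X (fun x => p x k)) ->
  (\sum_(k : Y) \int[mu]_(x in X) (p x k)%:E)%E = 1%E ->
  is_distance X d ->
  0 < eps ->
  (irreducible_rob_error mu X d eps p >=
     \int[mu]_(x in X) (ceilR (1 - max_posterior p x) * marginal p x)%:E)%E /\
  (\int[mu]_(x in X) (ceilR (1 - max_posterior p x) * marginal p x)%:E >=
     bayes_error mu X p)%E.
Proof.
move=> leb mX p0 mp sum1 [dpos dsep dsym dtri] eps0.
have marg0 x : X x -> 0 <= marginal p x.
  by move=> Xx; apply: sumr_ge0 => k _; exact: p0.
have ple x k : X x -> p x k <= marginal p x.
  move=> Xx; rewrite /marginal (bigD1 k) //= lerDl.
  by apply: sumr_ge0 => j _; exact: p0.
have post0 x k : X x -> 0 <= posterior p x k.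
  by move=> Xx; rewrite /posterior divr_ge0 //; [exact: p0|exact: marg0].
have post1 x k : X x -> posterior p x k <= 1.
  move=> Xx; rewrite /posterior.
  have [m0|m0] := eqVneq (marginal p x) 0.
    by rewrite m0 invr0 mulr0.
  have mp0 : 0 < marginal p x by rewrite lt0r m0 marg0.
  by rewrite ler_pdivrMr // mul1r ple.
have max0 x : X x -> 0 <= max_posterior p x.
  move=> Xx; rewrite /max_posterior.
  apply: (big_ind (fun v => 0 <= v)) => //.
    by move=> a b ha hb; rewrite le_max ha.
  by move=> i _; exact: post0.
have max1 x : X x -> max_posterior p x <= 1.
  move=> Xx; rewrite /max_posterior.
  apply: (big_ind (fun v => v <= 1)) => //.
    by move=> a b ha hb; rewrite ge_max ha hb.
  by move=> i _; exact: post1.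
have c0 x : X x -> 0 <= ceilR (1 - max_posterior p x).
  move=> Xx; rewrite /ceilR ler0z ceil_ge0.
  by have := max1 x Xx; lra.
have c1 x : X x -> ceilR (1 - max_posterior p x) <= 1.
  move=> Xx; rewrite /ceilR lerz1 ceil_le_int /=.
  by have := max0 x Xx; lra.
have cge x : X x -> 1 - max_posterior p x <= ceilR (1 - max_posterior p x).
  by move=> Xx; rewrite /ceilR; exact: ceil_ge.
split; last first.
  rewrite /bayes_error; apply: le_integral_nm.
    move=> x Xx; rewrite lee_fin mulr_ge0 ?marg0 //.
    by have := max1 x Xx; lra.
  by move=> x Xx; rewrite lee_fin ler_wpM2r ?marg0 ?cge.

have maxeq1 x j : X x -> 0 < marginal p x -> p x j = marginal p x ->
    max_posterior p x = 1.
  move=> Xx mp0 pj; apply/le_anti; rewrite max1 //=.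
  have <- : posterior p x j = 1.
    by rewrite /posterior pj divff // gt_eqF.
  exact: le_bigmax.
have cp x k : X x -> ceilR (1 - max_posterior p x) * p x k =
    (\prod_j (((p x j < marginal p x)%R)%:R)) * p x k.
  move=> Xx.
  have [m0|mn0] := eqVneq (marginal p x) 0.
    have -> : p x k = 0 by apply/le_anti; rewrite p0 // andbT -m0 ple.
    by rewrite !mulr0.
  have mp0 : 0 < marginal p x by rewrite lt0r mn0 marg0.
  have [allj|] := pselect (forall j, p x j < marginal p x).
    rewrite big1 ?mul1r; last by move=> j _; rewrite allj.
    have maxlt : max_posterior p x < 1.
      rewrite /max_posterior.
      apply: (big_ind (fun v => v < 1)) => //.
        by move=> a b ha hb; rewrite gt_max ha hb.
      by move=> i _; rewrite /posterior ltr_pdivrMr // mul1r allj.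
    suff -> : ceilR (1 - max_posterior p x) = 1 by rewrite mul1r.
    rewrite /ceilR (@ceil_def _ _ 1) //.
    rewrite subrr /=; have := max0 x Xx; move: maxlt; lra.
  move=> /existsNP [j /negP]; rewrite -leNgt => hj.
  have pj : p x j = marginal p x by apply/le_anti; rewrite hj ple.
  rewrite (bigD1 j) //= (_ : (p x j < marginal p x) = false); last first.
    by apply/negP; rewrite pj ltxx.
  by rewrite (maxeq1 x j) // subrr /ceilR ceil0 !mul0r.
apply: le_ereal_inf_tmp => _ [h mh <-]; rewrite /rob_error.
rewrite (eq_integral (fun x =>
    \sum_(k : Y) (ceilR (1 - max_posterior p x) * p x k)%:E)); last first.
  by move=> x _; rewrite sumEFin /marginal mulr_sumr.
rewrite ge0_integral_sum //; last 2 first.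
- move=> k.
  apply/(measurable_realfun.measurable_EFinP X (fun x => ceilR (1 - max_posterior p x) * p x k)).
  apply: (eq_measurable_fun (fun x =>
    (\prod_j (((p x j < marginal p x)%R)%:R)) * p x k)).
    by move=> x; rewrite inE => Xx; rewrite cp.
  apply: measurable_realfun.measurable_funM => //.
  apply: measurable_prod => j _; apply: mbool_R.
  apply: measurable_realfun.measurable_fun_ltr => //.
  rewrite /marginal; exact: measurable_sum.
- by move=> k x Xx; rewrite lee_fin mulr_ge0 ?c0 ?p0.
apply: lee_sum => k _; apply: le_integral_nm.
  by move=> x Xx; rewrite lee_fin mulr_ge0 ?c0 ?p0.
move=> x Xx; rewrite lee_fin.
have robge : 0 <= 1 - (`[< Rob X d eps p h x k >])%:R :> R.
  by case: (`[< _ >]); rewrite /= ?subr0 ?subrr.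
have [pk0|pkpos] : p x k = 0 \/ 0 < p x k.
  by have := p0 x k Xx; rewrite le_eqVlt => /orP[/eqP<-|]; [left|right].
  by rewrite pk0 !mulr0.
have [c_0|cn0] := eqVneq (ceilR (1 - max_posterior p x)) 0.
  by rewrite c_0 mul0r mulr_ge0 ?p0.
have [[j [jk pj]]|none] := pselect (exists j, j != k /\ 0 < p x j); last first.
  exfalso; move/eqP: cn0; apply.
  have oth j : j != k -> p x j = 0.
    move=> jk; apply/le_anti; rewrite p0 // andbT leNgt; apply/negP => pj.
    by apply: none; exists j.
  have margk : p x k = marginal p x.
    rewrite /marginal (bigD1 k) //= big1 ?addr0 //.
  have mp0 : 0 < marginal p x by rewrite -margk.
  by rewrite (maxeq1 x k) // subrr /ceilR ceil0.
have dxx : d x x = 0 by apply/(dsep x x Xx Xx).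
have notrob : ~ Rob X d eps p h x k.
  move=> [_ R2]; apply: R2.
  have [hk|hk] := eqVneq (h x) k.
    exists x, j; split => //; first by rewrite dxx ltW.
    by rewrite hk eq_sym.
  by exists x, k; split => //; rewrite dxx ltW.
rewrite asboolF // subr0 mul1r.
by rewrite ler_piMl ?p0 ?c1.
Qed.
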